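(* Let $\mathcal{N}=(D,P)$ be a broadcast network with client $P=(Q,I,\delta)$, let $G$ be its associated graph, and let $V_1,V_2$ be vertices of $G$. There is a path from $V_1$ to $V_2$ in $G$ if and only if there is a path in normal form from $V_1$ to $V_2$ in $G$.
   Context: A broadcast network is a pair $\mathcal{N}=(D,P)$ where $D$ is a finite set of messages and $P=(Q,I,\delta)$ is a finite automaton with transition relation $\delta\subseteq Q\times \mathrm{Ops}(D)\times Q$, $\mathrm{Ops}(D)=\{!a,\ ?a : a\in D\}$; write $q\xrightarrow{o}q'$ for $(q,o,q')\in\delta$. For $S\subseteq Q$ and $a\in D$ let $\mathrm{Post}_{?a}(S)=\{r'\in Q: \exists r\in S,\ r\xrightarrow{?a}r'\}$ and $\mathrm{Enabled}_{?a}(S)=\{r\in S : \mathrm{Post}_{?a}(\{r\})\neq\emptyset\}$. The graph $G=(V,\to_G)$ has vertex set $V=\bigcup_{k\le|Q|}(2^Q)^k$. There is an edge $(S_1,\dots,S_k)\to_G(S'_1,\dots,S'_k)$ iff: (1) there are $j\in[1..k]$, $s\in S_j$, $s'\in S'_j$, $a\in D$ with $s\xrightarrow{!a}s'$; (2) for each $i\in[1..k]$ there are $\mathrm{Gen}_i\subseteq\mathrm{Post}_{?a}(S_i)$ and $\mathrm{Kill}_i\subseteq\mathrm{Enabled}_{?a}(S_i)$ such that $S'_i=(S_i\setminus\mathrm{Kill}_i)\cup\mathrm{Gen}_i$ for $i\neq j$ and $S'_j=(U_j\setminus\mathrm{Kill}_j)\cup\mathrm{Gen}_j\cup\{s'\}$,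 where $U_j$ is either $S_j$ or $S_j\setminus\{s\}$; (3) for each $i$ and each $q\in\mathrm{Kill}_i$, $\mathrm{Post}_{?a}(\{q\})\cap\mathrm{Gen}_i\neq\emptyset$. A path is a finite sequence of vertices with consecutive ones joined by edges (possibly of length zero). A path $W_1\to_G\cdots\to_G W_n$ is in normal form if there is $m\in[1..n]$ such that $W_i\sqsubseteq W_{i+1}$ for all $i\in[1..m-1]$ and $W_i\sqsupseteq W_{i+1}$ for all $i\in[m..n-1]$, where $\sqsubseteq$ is componentwise inclusion of tuples of sets. *)

(* Defs.v *)
From mathcomp Require Import all_boot.
Set Implicit Arguments. Unset Strict Implicit. Unset Printing Implicit Defensive.

Inductive op (D : Type) := Send of D | Recv of D.
Arguments Send {D}. Arguments Recv {D}.

Section BN.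
Variables (D Q : finType) (delta : Q -> op D -> Q -> bool).

Definition post (a : D) (S : {set Q}) : {set Q} :=
  [set r' | [exists r in S, delta r (Recv a) r']].

Definition enabled (a : D) (S : {set Q}) : {set Q} :=
  [set r in S | post a [set r] != set0].

Definition vertex (W : seq {set Q}) : Prop := size W <= #|Q|.

(* edges of G; components are 0-indexed, i < k corresponds to i+1 in [1..k] *)
Definition edge (W W' : seq {set Q}) : Prop :=
  vertex W /\ vertex W' /\ size W = size W' /\
  exists (j : nat) (s s' : Q) (a : D),
    [/\ j < size W, s \in nth set0 W j, s' \in nth set0 W' j,
        delta s (Send a) s' &
        exists (Gen Kill : nat -> {set Q}) (removeS : bool),
          forall i, i < size W ->
            [/\ Gen i \subset post a (nth set0 W i),
                Kill i \subset enabled a (nth set0 W i),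
                (forall q, q \in Kill i -> post a [set q] :&: Gen i != set0) &
                if i == j then
                  nth set0 W' i =
                    ((if removeS then nth set0 W i :\ s else nth set0 W i)
                       :\: Kill i) :|: Gen i :|: [set s']
                else nth set0 W' i = (nth set0 W i :\: Kill i) :|: Gen i]].

(* a path W_1 -> ... -> W_n is represented by the list W_1 :: ws *)
Fixpoint is_path (W : seq {set Q}) (ws : seq (seq {set Q})) : Prop :=
  match ws with
  | [::] => vertex W
  | W' :: ws' => edge W W' /\ is_path W' ws'
  end.

Definition tle (W W' : seq {set Q}) : Prop :=
  size W = size W' /\ forall i, i < size W -> nth set0 W i \subset nth set0 W' i.

Definition path_from_to (V1 V2 : seq {set Q}) : Prop :=
  exists ws, is_path V1 ws /\ last V1 ws = V2.

Definition normal_form (ps : seq (seq {set Q})) : Prop :=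
  exists m, m < size ps /\
    forall i, i.+1 < size ps ->
      (i < m -> tle (nth [::] ps i) (nth [::] ps i.+1)) /\
      (m <= i -> tle (nth [::] ps i.+1) (nth [::] ps i)).

Definition nf_path_from_to (V1 V2 : seq {set Q}) : Prop :=
  exists ws, [/\ is_path V1 ws, last V1 ws = V2 & normal_form (V1 :: ws)].

End BN.

(* Main.v *)
Require Import Defs.
From mathcomp Require Import all_boot.
Set Implicit Arguments. Unset Strict Implicit. Unset Printing Implicit Defensive.

Section Aux.
Variables (D Q : finType) (delta : Q -> op D -> Q -> bool).

Definition tunion (A W : seq {set Q}) : seq {set Q} :=
  mkseq (fun i => nth set0 A i :|: nth set0 W i) (size A).

Lemma size_tunion A W : size (tunion A W) = size A.
Proof. by rewrite size_mkseq. Qed.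

Lemma nth_tunion A W i : i < size A ->
  nth set0 (tunion A W) i = nth set0 A i :|: nth set0 W i.
Proof. by move=> h; rewrite nth_mkseq. Qed.

Lemma post_mono a (S T : {set Q}) : S \subset T -> post delta a S \subset post delta a T.
Proof.
move=> sub; apply/subsetP => x; rewrite !inE => /existsP [r /andP [rS d]].
by apply/existsP; exists r; rewrite (subsetP sub).
Qed.

Lemma enabled_mono a (S T : {set Q}) : S \subset T -> enabled delta a S \subset enabled delta a T.
Proof.
move=> sub; apply/subsetP => x; rewrite !inE => /andP [rS h].
by rewrite (subsetP sub).
Qed.

Lemma edge_union A W W' : size A = size W -> edge delta W W' ->
  edge delta (tunion A W) (tunion A W').
Proof.
move=> sA [vW [vW' [sW [j [s [s' [a [jlt sin s'in dl [Gen [Kill [rmS H]]]]]]]]]]].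
split; first by rewrite /vertex size_tunion sA.
split; first by rewrite /vertex size_tunion sA sW.
split; first by rewrite !size_tunion.
exists j, s, s', a; rewrite size_tunion sA.
have jA : j < size A by rewrite sA.
split => //.
- by rewrite nth_tunion // inE sin orbT.
- by rewrite nth_tunion // inE s'in orbT.
exists Gen, (fun i => Kill i :\: nth set0 A i), (rmS && (s \notin nth set0 A j)).
move=> i ilt; have iA : i < size A by rewrite sA.
have [HG HK HK2 HE] := H i ilt.
rewrite !nth_tunion //; split.
- by apply: subset_trans HG _; apply: post_mono; apply: subsetUr.
- apply: subset_trans (subsetDl _ _) _; apply: subset_trans HK _.
  by apply: enabled_mono; apply: subsetUr.
- by move=> q; rewrite inE => /andP [_ /HK2].
clear H; case: eqP HE => [->|_] HE; rewrite {}HE; apply/setP => x; rewrite !inE.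
  case: rmS; case sa: (s \in nth set0 A j) => /=; rewrite !inE;
  case: (x =P s) => [->|/eqP ne]; rewrite ?eqxx ?sa ?ne /=;
  by try case: (_ \in nth set0 A j); try case: (_ \in nth set0 W j);
     try case: (_ \in Kill j); try case: (_ \in Gen j); try case: (_ == s').
by case: (x \in nth set0 A i); case: (_ \in nth set0 W i);
   case: (_ \in Kill i); case: (_ \in Gen i).
Qed.


Lemma tle_tunion A W : size A = size W -> tle W (tunion A W).
Proof.
move=> sA; split; first by rewrite size_tunion.
by move=> i ilt; rewrite nth_tunion ?sA // subsetUr.
Qed.

Lemma tle_tunionl A W : tle A (tunion A W).
Proof.
split; first by rewrite size_tunion.
by move=> i ilt; rewrite nth_tunion // subsetUl.
Qed.

Lemma tunion_absorb A W : tle W A -> tunion A W = A.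
Proof.
move=> [sW H]; apply: (@eq_from_nth _ set0); first by rewrite size_tunion.
move=> i; rewrite size_tunion => iA; rewrite nth_tunion //.
by apply/setUidPl; apply: H; rewrite sW.
Qed.

Lemma edge_size W W' : edge delta W W' -> size W = size W'.
Proof. by case=> _ [_ []]. Qed.

Fixpoint bigU (X : seq {set Q}) ws :=
  match ws with [::] => X | Y :: ws' => tunion (bigU Y ws') X end.

Lemma bigU_size X ws : is_path delta X ws -> size (bigU X ws) = size X.
Proof.
elim: ws X => [|Y ws IH] X //= [e p].
by rewrite size_tunion IH // (edge_size e).
Qed.

Lemma bigU_tle X ws : is_path delta X ws -> tle X (bigU X ws).
Proof.
case: ws => [|Y ws] /= p; first by split.
case: p => e p; apply: tle_tunion; by rewrite bigU_size // (edge_size e).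
Qed.

Fixpoint incr (X : seq {set Q}) ps :=
  match ps with [::] => True | Y :: ps' => tle X Y /\ incr Y ps' end.
Fixpoint decr (X : seq {set Q}) ps :=
  match ps with [::] => True | Y :: ps' => tle Y X /\ decr Y ps' end.

Lemma dec_part X ws : is_path delta X ws ->
  exists ps, [/\ is_path delta (bigU X ws) ps, last (bigU X ws) ps = last X ws
             & decr (bigU X ws) ps].
Proof.
elim: ws X => [|Y ws IH] X /=; first by move=> v; exists [::].
move=> [e p]; have [ps [p1 l1 d1]] := IH Y p.
exists (bigU Y ws :: ps) => /=; split => //.
- split => //.
  have := edge_union (A := bigU Y ws) _ e.
  rewrite (@tunion_absorb (bigU Y ws) Y); last exact: bigU_tle.
  by apply; rewrite bigU_size // (edge_size e).
- by split => //; apply: tle_tunionl.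
Qed.

Lemma inc_part X ws A : is_path delta X ws -> size A = size X -> tle X A ->
  exists ps, [/\ is_path delta A ps, last A ps = tunion A (bigU X ws)
             & incr A ps].
Proof.
elim: ws X A => [|Y ws IH] X A /=.
  move=> v sA t; exists [::]; split => //=; last by rewrite tunion_absorb.
  by rewrite /vertex sA.
move=> [e p] sA t.
have sY : size (tunion A Y) = size Y by rewrite size_tunion sA (edge_size e).
have sAY : size A = size Y by rewrite sA (edge_size e).
have [ps [p1 l1 i1]] := IH Y (tunion A Y) p sY (tle_tunion sAY).
have e' : edge delta A (tunion A Y).
  by have := edge_union (A := A) sA e; rewrite tunion_absorb.
exists (tunion A Y :: ps) => /=; split => //.
- rewrite l1; apply: (@eq_from_nth _ set0).
    by rewrite !size_tunion.
  move=> i; rewrite !size_tunion => iA.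
  have iY : i < size Y by rewrite -sY size_tunion.
  rewrite !nth_tunion ?size_tunion ?bigU_size //; try by rewrite -?sAY.
  have hX : nth set0 X i \subset nth set0 A i by case: t => _ h; apply: h; rewrite -sA.
  have hY : nth set0 Y i \subset nth set0 (bigU Y ws) i by case: (bigU_tle p) => _ h; apply: h.
  by rewrite -setUA (setUidPr hY) setUCA (setUidPl hX) setUC.
- by split => //; apply: tle_tunionl.
Qed.

Lemma is_path_cat X ps1 ps2 : is_path delta X ps1 ->
  is_path delta (last X ps1) ps2 -> is_path delta X (ps1 ++ ps2).
Proof.
elim: ps1 X => [|Y ps IH] X //= [e p] q; split => //; exact: IH.
Qed.

Fixpoint nf (X : seq {set Q}) ps :=
  match ps with
  | [::] => True
  | Y :: ps' => (tle X Y /\ nf Y ps') \/ decr X ps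
  end.

Lemma decr_nth X ps : decr X ps -> forall i, i < size ps ->
  tle (nth [::] (X :: ps) i.+1) (nth [::] (X :: ps) i).
Proof.
elim: ps X => [|Y ps IH] X //= [t d] [|i] //= ilt; exact: IH.
Qed.

Lemma nf_normal X ps : nf X ps -> normal_form (X :: ps).
Proof.
elim: ps X => [|Y ps IH] X /=.
  by move=> _; exists 0; split => // i.
case=> [[t n]|d].
  have [m [mlt H]] := IH Y n.
  exists m.+1; split => //; case=> [|i] /= ilt; first by split.
  by apply: H.
exists 0; split => // i ilt; split => // _.
by apply: (decr_nth (ps := Y :: ps)).
Qed.

Lemma nf_cat X ps1 ps2 : incr X ps1 -> decr (last X ps1) ps2 -> nf X (ps1 ++ ps2).
Proof.
elim: ps1 X => [|Y ps IH] X /=; first by case: ps2 => //= Y ps2 d; right.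
by move=> [t i] d; left; split => //; apply: IH.
Qed.

End Aux.

Theorem lemma3 (D Q : finType) (I : {set Q}) (delta : Q -> op D -> Q -> bool)
    (V1 V2 : seq {set Q}) :
  vertex V1 -> vertex V2 ->
  (path_from_to delta V1 V2 <-> nf_path_from_to delta V1 V2).
Proof.
move=> _ _; split; last by case=> ws [p l _]; exists ws.
case=> ws [p <-].
have tV : tle V1 V1 by split.
have [ps1 [p1 l1 i1]] := inc_part p (erefl _) tV.
have [ps2 [p2 l2 d2]] := dec_part p.
have eU : tunion V1 (bigU V1 ws) = bigU V1 ws.
  apply: (@eq_from_nth _ set0); first by rewrite size_tunion (bigU_size p).
  move=> i; rewrite size_tunion => iA; rewrite nth_tunion //.
  by apply/setUidPr; case: (bigU_tle p) => _ h; apply: h.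
rewrite eU in l1.
exists (ps1 ++ ps2); split.
- by apply: is_path_cat => //; rewrite l1.
- by rewrite last_cat l1.
- by apply: nf_normal; apply: nf_cat => //; rewrite l1.
Qed.
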